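(* Let $A=\{0,1\}$, $n\ge 1$, and let $\rho\subseteq A^n$ with $\rho\neq A^n$. Then $\rho$ is a key relation if and only if there exist linear equations $L_1,\dots,L_m$ ($m\ge 1$), each of the form $c_1x_1+\dots+c_nx_n=c_0$ with $c_0,\dots,c_n\in\{0,1\}$ and addition modulo $2$, such that $\rho=\{(x_1,\dots,x_n)\in A^n : \text{at least one of } L_1,\dots,L_m \text{ holds}\}$, i.e. $\rho(x_1,\dots,x_n)=L_1\vee\dots\vee L_m$.
   Context: A relation of arity $n$ on a finite set $A$ is a subset $\rho\subseteq A^n$. A unary vector-function is a tuple $\Psi=(\psi_1,\dots,\psi_n)$ of maps $\psi_i:A\to A$, acting on tuples coordinatewise: $\Psi(a_1,\dots,a_n)=(\psi_1(a_1),\dots,\psi_n(a_n))$; $\Psi$ preserves $\rho$ if $\Psi(\alpha)\in\rho$ for all $\alpha\in\rho$. A relation $\rho\subseteq A^n$ is a key relation if there is a tuple $\beta\in A^n\setminus\rho$ (called a key tuple for $\rho$) such that for every $\alpha\in A^n\setminus\rho$ there exists a unary vector-function $\Psi$ preserving $\rho$ with $\Psi(\alpha)=\beta$. *)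

(* Defs.v *)
(* A = {0,1} is modelled by bool (false = 0, true = 1). *)
From mathcomp Require Import all_boot.
Set Implicit Arguments. Unset Strict Implicit. Unset Printing Implicit Defensive.

Definition tup (A : finType) (n : nat) := {ffun 'I_n -> A}.

Definition relation (A : finType) (n : nat) := {set tup A n}.

Definition vecfun (A : finType) (n : nat) := 'I_n -> A -> A.

Definition vapply (A : finType) (n : nat) (Psi : vecfun A n) (a : tup A n) : tup A n :=
  [ffun i => Psi i (a i)].

Definition preserves (A : finType) (n : nat) (Psi : vecfun A n) (rho : relation A n) : Prop :=
  forall a, a \in rho -> vapply Psi a \in rho.

Definition key_tuple (A : finType) (n : nat) (rho : relation A n) (b : tup A n) : Prop :=
  b \notin rho /\
  forall a, a \notin rho -> exists Psi : vecfun A n, preserves Psi rho /\ vapply Psi a = b.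

Definition key_relation (A : finType) (n : nat) (rho : relation A n) : Prop :=
  exists b, key_tuple rho b.

(* A linear equation c_1 x_1 + ... + c_n x_n = c_0 over GF(2),
   given by the coefficient tuple (c_1..c_n) and the constant c_0. *)
Definition lineq (n : nat) : Type := (tup bool n * bool)%type.

Definition lineq_holds (n : nat) (L : lineq n) (x : tup bool n) : bool :=
  (\big[addb/false]_(i < n) (L.1 i && x i)) == L.2.

(* Main.v *)
Require Import Defs.
From mathcomp Require Import all_boot.
Set Implicit Arguments. Unset Strict Implicit. Unset Printing Implicit Defensive.

Definition z0 {n} : tup bool n := [ffun _ => false].
Definition tadd n (x y : tup bool n) : tup bool n := [ffun i => x i (+) y i].
Definition tand n (x y : tup bool n) : tup bool n := [ffun i => x i && y i].
Definition dot n (c x : tup bool n) : bool := \big[addb/false]_(i < n) (c i && x i).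
Definition ext n (v : tup bool n) (t : bool) : tup bool n.+1 :=
  [ffun i => if unlift ord_max i is Some j then v j else t].
Definition rest n (w : tup bool n.+1) : tup bool n := [ffun j => w (lift ord_max j)].
Definition restf n (Psi : vecfun bool n.+1) : vecfun bool n := fun j => Psi (lift ord_max j).

Lemma ext_rest n (w : tup bool n.+1) : ext (rest w) (w ord_max) = w.
Proof. apply/ffunP => i; rewrite !ffunE; case: unliftP => [j ->|->] //; by rewrite ffunE. Qed.

Lemma ext_lift n (v : tup bool n) t j : ext v t (lift ord_max j) = v j.
Proof. rewrite ffunE; case: unliftP => [j' /lift_inj -> //|].
by move=> /eqP; rewrite eq_sym (negbTE (neq_lift _ _)). Qed.

Lemma ext_last n (v : tup bool n) t : ext v t ord_max = t.
Proof. by rewrite ffunE unlift_none. Qed.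

Lemma rest_ext n (v : tup bool n) t : rest (ext v t) = v.
Proof. by apply/ffunP => j; rewrite ffunE; apply: ext_lift. Qed.

Lemma vapply_ext n (Psi : vecfun bool n.+1) v t :
  vapply Psi (ext v t) = ext (vapply (restf Psi) v) (Psi ord_max t).
Proof.
apply/ffunP => i; rewrite [LHS]ffunE; case: (unliftP ord_max i) => [j ->|->].
  by rewrite !ext_lift ffunE.
by rewrite !ext_last.
Qed.

Lemma dot_ext n (c v : tup bool n) s t : dot (ext c s) (ext v t) = dot c v (+) (s && t).
Proof.
rewrite /dot big_ord_recr /= !ext_last; congr addb; apply: eq_bigr => i _.
have -> : widen_ord (leqnSn n) i = lift ord_max i.
  by apply: val_inj; rewrite /= /bump leqNgt ltn_ord.
by rewrite !ext_lift.
Qed.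

Lemma dot_add n (c x y : tup bool n) : dot c (tadd x y) = dot c x (+) dot c y.
Proof.
rewrite /dot -big_split /=; apply: eq_bigr => i _; rewrite ffunE.
by case: (c i) (x i) (y i) => [] [] [].
Qed.

Lemma dot_z0l n (x : tup bool n) : dot z0 x = false.
Proof. by rewrite /dot big1 // => i _; rewrite ffunE. Qed.

Lemma dot_z0r n (x : tup bool n) : dot x z0 = false.
Proof. by rewrite /dot big1 // => i _; rewrite ffunE andbF. Qed.

Lemma tadd_K n (x y : tup bool n) : tadd x (tadd x y) = y.
Proof. by apply/ffunP => i; rewrite !ffunE addKb. Qed.

Lemma tadd_Kr n (x y : tup bool n) : tadd (tadd x y) y = x.
Proof. by apply/ffunP => i; rewrite !ffunE addbK. Qed.

Lemma tadd_C n (x y : tup bool n) : tadd x y = tadd y x.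
Proof. by apply/ffunP => i; rewrite !ffunE addbC. Qed.

Lemma L1 n (m u : tup bool n) : tand m (tadd (tand m u) u) = z0.
Proof. by apply/ffunP => i; rewrite !ffunE; case: (m i) (u i) => [] []. Qed.

Lemma L2 n (m u z : tup bool n) : tand m z = z0 -> tand m (tadd z u) = tand m u.
Proof.
move/ffunP => H; apply/ffunP => i; have := H i; rewrite !ffunE.
by case: (m i) (u i) (z i) => [] [] [].
Qed.

Lemma L3 n (m u c : tup bool n) : tand m (tadd (tadd c u) u) = tand m c.
Proof. by rewrite tadd_Kr. Qed.

Lemma L4 n (m c : tup bool n) : tand m (tadd c (tand m c)) = z0.
Proof. by apply/ffunP => i; rewrite !ffunE; case: (m i) (c i) => [] []. Qed.

Lemma vform n (f : vecfun bool n) u : vapply f u = z0 ->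
  forall v, vapply f v = tand [ffun j => f j (~~ u j)] (tadd v u).
Proof.
move/ffunP => H v; apply/ffunP => j; have := H j; rewrite !ffunE.
by case: (u j); case: (v j) => /= Hj; rewrite ?Hj ?andbF ?andbT.
Qed.

Definition KP n (C : pred (tup bool n)) := forall a, C a ->
  exists Psi : vecfun bool n, vapply Psi a = z0 /\ forall w, C (vapply Psi w) -> C w.

Lemma extract n (C : pred (tup bool n.+1)) (KC : KP C) v t : C (ext v t) ->
  exists (f : vecfun bool n) (g : bool -> bool), vapply f v = z0 /\ g t = false /\
    forall v' t', C (ext (vapply f v') (g t')) -> C (ext v' t').
Proof.
move=> /KC [Psi [H1 H2]]; exists (restf Psi), (Psi ord_max).
rewrite vapply_ext in H1; split; last split.
- by have := congr1 (@rest n) H1; rewrite rest_ext => ->; apply/ffunP => j; rewrite !ffunE.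
- by have := congr1 (fun w : tup bool n.+1 => w ord_max) H1; rewrite ext_last ffunE.
- by move=> v' t' H; apply: H2; rewrite vapply_ext.
Qed.

Section Slice.
Variables (n : nat) (C : pred (tup bool n.+1)) (KC : KP C).
Hypothesis Z : C (ext z0 false).
Hypothesis Cl : forall x y, C (ext x false) -> C (ext y false) -> C (ext (tadd x y) false).

Lemma msk (m : tup bool n) : (forall z, tand m z = z0 -> C (ext z false)) ->
  forall y, C (ext y false) -> C (ext (tand m y) false).
Proof.
move=> K y Hy; have -> : tand m y = tadd y (tadd y (tand m y)) by rewrite tadd_K.
by apply: Cl => //; apply: K; apply: L4.
Qed.

Lemma constcase u f g : C (ext u true) -> vapply f u = z0 -> g true = false -> g false = false ->
  (forall v' t', C (ext (vapply f v') (g t')) -> C (ext v' t')) ->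
  forall v, C (ext v true) = C (ext v false).
Proof.
move=> Hu fu g1 g0 P.
have P3 : forall v', C (ext (vapply f v') false) -> C (ext v' false) /\ C (ext v' true).
  by move=> v' H; split; apply: P; rewrite ?g0 ?g1.
set m := [ffun j => f j (~~ u j)].
have Cu0 : C (ext u false) by have := P3 u; rewrite fu => /(_ Z) [].
have Ker : forall z, tand m z = z0 -> C (ext z false).
  move=> z Hz; rewrite -(tadd_K u z); apply: Cl => //.
  by have := P3 (tadd u z); rewrite (vform fu) (tadd_C u z) L3 Hz => /(_ Z) [].
have C01 : forall c, C (ext c false) -> C (ext c true).
  move=> c Hc; have := P3 c; rewrite (vform fu); case => //.
  by apply: msk => //; exact: Cl.
move=> v; apply/idP/idP; last exact: C01.
move=> Hv; have [f' [g' [fv [g1' P']]]] := extract KC Hv.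
case E: (g' false).
  by apply: P'; rewrite E fv; apply: C01.
by apply: P'; rewrite E fv.
Qed.

Lemma negker u f g : vapply f u = z0 -> g true = false -> g false = true ->
  (forall v' t', C (ext (vapply f v') (g t')) -> C (ext v' t')) ->
  forall z, tand [ffun j => f j (~~ u j)] z = z0 -> C (ext z false).
Proof.
move=> fu g1 g0 P; set m := [ffun j => f j (~~ u j)].
have mu : C (ext (tand m u) true).
  by apply: P; rewrite g1 (vform fu) L1.
move=> z Hz; apply: P; rewrite g0 (vform fu) L2 //.
Qed.

Lemma negcase u f g : vapply f u = z0 -> g true = false -> g false = true ->
  (forall v' t', C (ext (vapply f v') (g t')) -> C (ext v' t')) ->
  forall c, C (ext c false) -> C (ext (tadd c u) true).
Proof.
move=> fu g1 g0 P c Hc; have K := negker fu g1 g0 P.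
apply: P; rewrite g1 (vform fu) L3; exact: msk.
Qed.

Lemma slice u : C (ext u true) -> forall v, C (ext v true) = C (ext (tadd v u) false).
Proof.
move=> Hu; have [f [g [fu [g1 P]]]] := extract KC Hu.
case g0: (g false).
  have N := negcase fu g1 g0 P.
  move=> v; apply/idP/idP; last by move/N; rewrite tadd_Kr.
  move=> Hv; have [f' [g' [fv [g1' P']]]] := extract KC Hv.
  case g0': (g' false); last first.
    have EQ := constcase Hv fv g1' g0' P'.
    by apply: Cl; rewrite -EQ.
  have Nv := negcase fv g1' g0' P'.
  have K := negker fu g1 g0 P.
  apply: P; rewrite g0 (vform fu) L3.
  set m := [ffun j => f j (~~ u j)].
  have -> : tand m v = tadd (tadd v (tand m v)) v by rewrite tadd_C tadd_K.
  by apply: Nv; apply: K; apply: L4.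
have EQ := constcase Hu fu g1 g0 P.
move=> v; rewrite EQ; apply/idP/idP => H.
  by apply: Cl => //; rewrite -EQ.
by rewrite -(tadd_Kr v u); apply: Cl => //; rewrite -EQ.
Qed.
End Slice.

Lemma linrep n (C : pred (tup bool n)) : C z0 -> KP C ->
  exists cs : seq (tup bool n), forall x, C x = all (fun c => ~~ dot c x) cs.
Proof.
elim: n C => [|n IH] C Z KC.
  exists [::] => x /=; have -> : x = z0 by apply/ffunP => -[].
  by rewrite Z.
pose C0 : pred (tup bool n) := fun v => C (ext v false).
have E0 : ext (z0 : tup bool n) false = z0.
  by apply/ffunP => i; rewrite !ffunE; case: unlift => // j; rewrite ffunE.
have Z0 : C0 z0 by rewrite /C0 E0.
have K0 : KP C0.
  move=> a Ha; have [f [g [fa [ga P]]]] := extract KC Ha.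
  exists f; split => // w Hw; apply: P; rewrite ga; exact: Hw.
have [cs0 Hcs0] := IH C0 Z0 K0.
have Cl : forall x y, C (ext x false) -> C (ext y false) -> C (ext (tadd x y) false).
  move=> x y; rewrite -!/(C0 _) !Hcs0 => /allP Hx /allP Hy; apply/allP => c Hc.
  by rewrite dot_add; move: (Hx c Hc) (Hy c Hc); case: (dot c x); case: (dot c y).
have Zc : C (ext z0 false) by exact: Z0.
case: (boolP [exists u, C (ext u true)]).
  move=> /existsP [u Hu]; have S := slice KC Zc Cl Hu.
  exists (map (fun c => ext c (dot c u)) cs0) => x.
  rewrite -(ext_rest x); move: (rest x) (x ord_max) => v [].
    rewrite S -/(C0 _) Hcs0 all_map; apply: eq_all => c /=.
    by rewrite dot_ext dot_add andbT.
  rewrite -/(C0 _) Hcs0 all_map; apply: eq_all => c /=.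
  by rewrite dot_ext andbF addbF.
move=> /existsPn Hn; exists (ext z0 true :: map (fun c => ext c false) cs0) => x.
rewrite -(ext_rest x); move: (rest x) (x ord_max) => v [].
  by rewrite (negbTE (Hn v)) /= dot_ext dot_z0l.
rewrite -/(C0 _) Hcs0 /= dot_ext dot_z0l /= all_map; apply: eq_all => c /=.
by rewrite dot_ext andbF addbF.
Qed.

Lemma holdsE n (L : lineq n) x : lineq_holds L x = (dot L.1 x == L.2).
Proof. by []. Qed.

Theorem mainTheorem1 (n : nat) (hn : 1 <= n) (rho : relation bool n)
  (hrho : rho != [set: tup bool n]) :
  key_relation rho <->
  exists Ls : seq (lineq n),
    0 < size Ls /\
    rho = [set x : tup bool n | has (fun L => lineq_holds L x) Ls].
Proof.
split.
  move=> [b [Hb Hkey]].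
  pose C : pred (tup bool n) := fun x => tadd x b \notin rho.
  have Z : C z0.
    by rewrite /C; have -> : tadd z0 b = b by apply/ffunP => i; rewrite !ffunE.
  have KC : KP C.
    move=> a Ha; have [Psi [Pp Pa]] := Hkey _ Ha.
    exists (fun i t => Psi i (t (+) b i) (+) b i); split.
      apply/ffunP => i; rewrite !ffunE; have := congr1 (fun w : tup bool n => w i) Pa.
      by rewrite !ffunE => ->; rewrite addbb.
    move=> w; rewrite /C; apply: contra => Hw.
    have -> : tadd (vapply (fun i t => Psi i (t (+) b i) (+) b i) w) b = vapply Psi (tadd w b).
      by apply/ffunP => i; rewrite !ffunE addbK.
    exact: Pp.
  have [cs Hcs] := linrep Z KC.
  exists (map (fun c => (c, ~~ dot c b)) (z0 :: cs)); split => //.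
  apply/setP => x; rewrite inE.
  have -> : (x \in rho) = ~~ C (tadd x b) by rewrite /C tadd_Kr negbK.
  rewrite Hcs has_map /= holdsE /= !dot_z0l /= -has_predC.
  apply: eq_has => c /=; rewrite holdsE dot_add.
  by case: (dot c x); case: (dot c b).
move=> [Ls [_ Hrho]].
have [b Hb] : exists b, b \notin rho.
  apply/existsP; move: hrho; apply: contraR; rewrite negb_exists => /forallP H.
  by apply/eqP/setP => x; rewrite inE; move: (H x); rewrite negbK.
exists b; split => // a Ha.
exists (fun i t => t (+) (a i (+) b i)); split.
  move=> x; rewrite Hrho !inE => /hasP [L LL HL].
  apply/hasP; exists L => //.
  move: Ha Hb; rewrite Hrho !inE => /hasPn Ha /hasPn Hb.
  move: (Ha L LL) (Hb L LL) HL; rewrite !holdsE.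
  have -> : vapply (fun i t => t (+) (a i (+) b i)) x = tadd x (tadd a b) by apply/ffunP => i; rewrite !ffunE.
  rewrite !dot_add.
  by case: (dot L.1 x); case: (dot L.1 a); case: (dot L.1 b); case: L.2.
by apply/ffunP => i; rewrite !ffunE addKb.
Qed.
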